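(* In the setting and notation described in the context (GKSM iteration), assume in addition that the stepsizes satisfy $0<\alpha_{\min}\le\alpha_k\le\alpha_{\max}<\frac{2\underline{\eta}}{\underline{\eta}+L}$ for all $k$, and put $\upsilon:=\frac{\underline{\eta}}{\alpha_{\max}}-\frac{\underline{\eta}+L}{2}>0$ and $\Delta_k:=\min_{1\le k'\le k}\|\mathbf{x}_{k'+1}-\mathbf{x}_{k'}\|_2^2$. Then, for any $K\in\{1,2,\dots\}\cup\{+\infty\}$ and all $k\ge1$: (i) $F(\mathbf{x}_{k+1})\le F(\mathbf{x}_k)$; (ii) $\Delta_k\le \dfrac{F(\mathbf{x}_1)-F^*}{\upsilon\,k}$, where $F^*=\inf_{\mathbf{x}\in\mathcal C}F(\mathbf{x})$; (iii) $\|\mathbf{x}_{k+1}-\mathbf{x}_k\|\to0$ as $k\to\infty$.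
   Context: Setting. Identify $\mathbb C^N$ with $\mathbb R^{2N}$ equipped with the real inner product $\mathrm{Re}\langle\mathbf u,\mathbf v\rangle$, where $\langle\mathbf u,\mathbf v\rangle=\mathbf u^{H}\mathbf v$ ($^H$ = conjugate transpose); all gradients are taken with respect to this inner product. Let $\mathbf A\in\mathbb C^{m\times N}$, $\mathbf y\in\mathbb C^m$ with $\mathbf A^H\mathbf y\neq\mathbf 0$, and $h(\mathbf x)=\frac12\|\mathbf A\mathbf x-\mathbf y\|_2^2$ (so $\nabla h(\mathbf x)=\mathbf A^H(\mathbf A\mathbf x-\mathbf y)$). Let $f:\mathbb C^N\to\mathbb R$ be differentiable and bounded below, with $\nabla f$ $L$-Lipschitz ($L>0$): $\|\nabla f(\mathbf x_1)-\nabla f(\mathbf x_2)\|\le L\|\mathbf x_1-\mathbf x_2\|$. Let $\mathcal C\subseteq\mathbb C^N$ be nonempty, closed and convex, $\iota_{\mathcal C}$ its indicator function ($0$ on $\mathcal C$, $+\infty$ outside), $F=h+f$, $F_{\mathcal C}=F+\iota_{\mathcal C}$, and $\|\mathbf x\|_{\mathbf M}^2=\mathbf x^H\mathbf M\mathbf x$. GKSM iteration. Fix $K\in\{1,2,\dots\}\cup\{+\infty\}$, stepsizes $\alpha_k>0$, and Hermitian matrices $\mathbf B_k\in\mathbb C^{N\times N}$ with $\underline{\eta}\,\mathbf I\preceq\mathbf B_k\preceq\overline{\eta}\,\mathbf I$ for all $k$, where $0<\underline{\eta}\le\overline{\eta}<\infty$ (in the paper $\mathbf B_k$ is produced by a modified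 self-scaling Hermitian rank-one quasi-Newton rule whose output satisfies these bounds). Let $\mathbf V_1=\mathbf A^H\mathbf y/\|\mathbf A^H\mathbf y\|$ and choose $\mathbf x_1\in\mathcal C\cap\operatorname{range}(\mathbf V_1)$. For $k=1,2,\dots$: define $\bar F_k(\mathbf x)=h(\mathbf x)+\mathrm{Re}\langle\nabla f(\mathbf x_k),\mathbf x\rangle+\frac{1}{2\alpha_k}\|\mathbf x-\mathbf x_k\|_{\mathbf B_k}^2$; let $\boldsymbol\beta_k$ be the (unique) minimizer of $\boldsymbol\beta\mapsto\bar F_k(\mathbf V_k\boldsymbol\beta)$ over $\{\boldsymbol\beta:\mathbf V_k\boldsymbol\beta\in\mathcal C\}$, and set $\mathbf x_{k+1}=\mathbf V_k\boldsymbol\beta_k$. Then, if $k\le K$: compute $\mathbf r_k=\nabla\bar F_k(\mathbf x_{k+1})=\mathbf A^H(\mathbf A\mathbf x_{k+1}-\mathbf y)+\nabla f(\mathbf x_k)+\alpha_k^{-1}\mathbf B_k(\mathbf x_{k+1}-\mathbf x_k)$ and $\tilde{\mathbf r}_k=(\mathbf I-\mathbf V_k\mathbf V_k^H)\mathbf r_k$; if $\tilde{\mathbf r}_k\ne\mathbf 0$ set $\mathbf V_{k+1}=[\mathbf V_k,\ \tilde{\mathbf r}_k/\|\tilde{\mathbf r}_k\|]$, otherwise $\mathbf V_{k+1}=\mathbf V_k$. If $k>K$: set $\mathbf V_{k+1}=\mathbf I_N$. (Thus every $\mathbf V_k$ has orthonormal columns, $\mathbf V_k^H\mathbf V_k=\mathbf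 I$.) *)

(* Defs.v *)
From mathcomp Require Import all_boot all_order all_algebra.
From mathcomp Require Import all_classical all_reals all_analysis.
From mathcomp Require Export complex.
Import GRing.Theory Num.Theory.
Set Implicit Arguments.
Unset Strict Implicit.
Unset Printing Implicit Defensive.
Local Open Scope ring_scope.
Local Open Scope classical_set_scope.

Section GKSMDefs.
Context {R : realType}.

Definition adj {p q : nat} (M : 'M[R[i]]_(p, q)) : 'M[R[i]]_(q, p) :=
  (map_mx conjc M)^T.

(* real inner product Re <u, v> = Re (u^H v) on C^n ~ R^{2n} *)
Definition rdot {n : nat} (u v : 'cV[R[i]]_n) : R := complex.Re ((adj u *m v) 0 0).
Definition nrm2 {n : nat} (u : 'cV[R[i]]_n) : R := rdot u u.
Definition nrm {n : nat} (u : 'cV[R[i]]_n) : R := Num.sqrt (nrm2 u).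

(* ||x||_M^2 = x^H M x  (real for Hermitian M; we take the real part) *)
Definition qform {n : nat} (M : 'M[R[i]]_n) (u : 'cV[R[i]]_n) : R :=
  complex.Re ((adj u *m M *m u) 0 0).

Definition rscale {n : nat} (r : R) (u : 'cV[R[i]]_n) : 'cV[R[i]]_n :=
  (r%:C)%C *: u.

Definition is_gradient {n : nat} (f : 'cV[R[i]]_n -> R) (g : 'cV[R[i]]_n -> 'cV[R[i]]_n) :=
  forall (u : 'cV[R[i]]_n) (eps : R), 0 < eps ->
    exists2 del : R, 0 < del & forall d : 'cV[R[i]]_n, nrm d < del ->
      `|f (u + d) - f u - rdot (g u) d| <= eps * nrm d.

Definition lipschitz_with {n : nat} (L : R) (g : 'cV[R[i]]_n -> 'cV[R[i]]_n) :=
  forall u v, nrm (g u - g v) <= L * nrm (u - v).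

Definition closed_subset {n : nat} (S : set 'cV[R[i]]_n) :=
  forall u, (forall eps : R, 0 < eps -> exists2 c, S c & nrm (c - u) < eps) -> S u.

Definition convex_subset {n : nat} (S : set 'cV[R[i]]_n) :=
  forall u v (t : R), S u -> S v -> 0 <= t <= 1 -> S (rscale t u + rscale (1 - t) v).

Definition is_hermitian {n : nat} (M : 'M[R[i]]_n) := adj M = M.

Definition loewner_between {n : nat} (lo hi : R) (M : 'M[R[i]]_n) :=
  forall v : 'cV[R[i]]_n, lo * nrm2 v <= qform M v /\ qform M v <= hi * nrm2 v.

Definition colmx {n : nat} (s : seq 'cV[R[i]]_n) : 'M[R[i]]_(n, size s) :=
  \matrix_(a, j) (nth 0 s j) a 0.

(* K in {1,2,...} U {+oo}: Some K or None (= +oo);  "k <= K" *)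
Definition leK (k : nat) (K : option nat) : bool :=
  if K is Some K' then (k <= K')%N else true.

Definition hfun {m n : nat} (A : 'M[R[i]]_(m, n)) (y : 'cV[R[i]]_m) (u : 'cV[R[i]]_n) : R :=
  2^-1 * nrm2 (A *m u - y).

Definition Fbar {m n : nat} (A : 'M[R[i]]_(m, n)) (y : 'cV[R[i]]_m)
  (gf : 'cV[R[i]]_n -> 'cV[R[i]]_n) (alpha : nat -> R) (B : nat -> 'M[R[i]]_n)
  (x : nat -> 'cV[R[i]]_n) (k : nat) (u : 'cV[R[i]]_n) : R :=
  hfun A y u + rdot (gf (x k)) u + (2 * alpha k)^-1 * qform (B k) (u - x k).

(* The GKSM iteration (indices k >= 1; index 0 unused).  Vs k is the list of
   columns of V_k. *)
Definition GKSM_run {m n : nat} (A : 'M[R[i]]_(m, n)) (y : 'cV[R[i]]_m)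
  (gf : 'cV[R[i]]_n -> 'cV[R[i]]_n) (Cs : set 'cV[R[i]]_n) (K : option nat)
  (alpha : nat -> R) (B : nat -> 'M[R[i]]_n)
  (x : nat -> 'cV[R[i]]_n) (Vs : nat -> seq 'cV[R[i]]_n) : Prop :=
  [/\ Vs 1%N = [:: rscale (nrm (adj A *m y))^-1 (adj A *m y)],
      Cs (x 1%N) /\ (exists beta, x 1%N = colmx (Vs 1%N) *m beta),
      (forall k, (0 < k)%N ->
         exists beta : 'cV[R[i]]_(size (Vs k)),
           [/\ x k.+1 = colmx (Vs k) *m beta, Cs (colmx (Vs k) *m beta) &
               forall beta' : 'cV[R[i]]_(size (Vs k)), Cs (colmx (Vs k) *m beta') ->
                 Fbar A y gf alpha B x k (colmx (Vs k) *m beta)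
                 <= Fbar A y gf alpha B x k (colmx (Vs k) *m beta')]),
      (forall k, (0 < k)%N -> leK k K ->
         let r := adj A *m (A *m x k.+1 - y) + gf (x k)
                  + rscale (alpha k)^-1 (B k *m (x k.+1 - x k)) in
         let rt := r - colmx (Vs k) *m (adj (colmx (Vs k)) *m r) in
         Vs k.+1 = if rt != 0 then rcons (Vs k) (rscale (nrm rt)^-1 rt) else Vs k) &
      (forall k, (0 < k)%N -> ~~ leK k K ->
         Vs k.+1 = [seq col j (1%:M : 'M[R[i]]_n) | j <- enum 'I_n])].

Definition Delta {n : nat} (x : nat -> 'cV[R[i]]_n) (k : nat) : R :=
  \big[Num.min/nrm2 (x 2%N - x 1%N)]_(1 <= k' < k.+1) nrm2 (x k'.+1 - x k').

End GKSMDefs.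

(* Main.v *)
Require Import Defs.
From mathcomp Require Import all_boot all_order all_algebra.
From mathcomp Require Import all_classical all_reals all_analysis.
From mathcomp Require Import complex.
From mathcomp Require Import ring lra.
Import Order.TTheory GRing.Theory Num.Theory numFieldNormedType.Exports.
Local Open Scope ring_scope.
Local Open Scope classical_set_scope.

Section Basics.
Context {R : realType} {n : nat}.
Implicit Types u v w : 'cV[R[i]]_n.

Lemma ReD (a b : R[i]) : complex.Re (a + b) = complex.Re a + complex.Re b.
Proof. by case: a; case: b. Qed.
Lemma ImD (a b : R[i]) : complex.Im (a + b) = complex.Im a + complex.Im b.
Proof. by case: a; case: b. Qed.
Lemma ReN (a : R[i]) : complex.Re (- a) = - complex.Re a.
Proof. by case: a. Qed.
Lemma ImN (a : R[i]) : complex.Im (- a) = - complex.Im a.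
Proof. by case: a. Qed.
Lemma ReZ (t : R) (a : R[i]) : complex.Re ((t%:C)%C * a) = t * complex.Re a.
Proof. case: a => a b /=; ring. Qed.
Lemma ImZ (t : R) (a : R[i]) : complex.Im ((t%:C)%C * a) = t * complex.Im a.
Proof. case: a => a b /=; ring. Qed.

Definition pt (a b : R[i]) := complex.Re a * complex.Re b + complex.Im a * complex.Im b.

Lemma rdotE u v : rdot u v = \sum_i pt (u i 0) (v i 0).
Proof.
rewrite /rdot mxE.
rewrite (big_morph (@complex.Re R) ReD (erefl (complex.Re (0:R[i])))).
apply: eq_bigr => i _; rewrite /adj /pt !mxE.
case: (u i 0) => a b; case: (v i 0) => c d /=. ring.
Qed.

Lemma rdotC u v : rdot u v = rdot v u.
Proof. rewrite !rdotE; apply: eq_bigr => i _ /=; rewrite /pt; ring. Qed.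

Lemma rdotDl u v w : rdot (u + v) w = rdot u w + rdot v w.
Proof. rewrite !rdotE -big_split; apply: eq_bigr => i _ /=; rewrite /pt mxE ReD ImD. ring. Qed.
Lemma rdotDr u v w : rdot w (u + v) = rdot w u + rdot w v.
Proof. by rewrite rdotC rdotDl !(rdotC w). Qed.
Lemma rdotNl u v : rdot (- u) v = - rdot u v.
Proof. rewrite !rdotE -sumrN; apply: eq_bigr => i _ /=; rewrite /pt mxE ReN ImN; ring. Qed.
Lemma rdotNr u v : rdot v (- u) = - rdot v u.
Proof. by rewrite rdotC rdotNl rdotC. Qed.
Lemma rdotBl u v w : rdot (u - v) w = rdot u w - rdot v w.
Proof. by rewrite rdotDl rdotNl. Qed.
Lemma rdotBr u v w : rdot w (u - v) = rdot w u - rdot w v.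
Proof. by rewrite rdotDr rdotNr. Qed.
Lemma rdotZl t u v : rdot (rscale t u) v = t * rdot u v.
Proof. rewrite !rdotE mulr_sumr; apply: eq_bigr => i _ /=; rewrite /pt mxE ReZ ImZ; ring. Qed.
Lemma rdotZr t u v : rdot v (rscale t u) = t * rdot v u.
Proof. by rewrite rdotC rdotZl rdotC. Qed.
Lemma rdot0l v : rdot 0 v = 0.
Proof. by rewrite -(subrr v) rdotBl subrr. Qed.

Lemma nrm2_ge0 u : 0 <= nrm2 u.
Proof. rewrite /nrm2 rdotE; apply: sumr_ge0 => i _; rewrite /pt; nra. Qed.

Lemma nrm_ge0 u : 0 <= nrm u.
Proof. exact: sqrtr_ge0. Qed.

Lemma nrm_sq u : nrm u ^+ 2 = nrm2 u.
Proof. by rewrite /nrm sqr_sqrtr // nrm2_ge0. Qed.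

Lemma nrm2Z t u : nrm2 (rscale t u) = t ^+ 2 * nrm2 u.
Proof. by rewrite /nrm2 rdotZl rdotZr mulrA expr2. Qed.

Lemma nrmZ t u : nrm (rscale t u) = `|t| * nrm u.
Proof. by rewrite /nrm nrm2Z sqrtrM ?sqrtr_sqr // sqr_ge0. Qed.

Lemma nrm2N u : nrm2 (- u) = nrm2 u.
Proof. by rewrite /nrm2 rdotNl rdotNr opprK. Qed.

Lemma nrm2D u v : nrm2 (u + v) = nrm2 u + 2 * rdot u v + nrm2 v.
Proof. rewrite /nrm2 rdotDl !rdotDr (rdotC v u); ring. Qed.

Lemma rdot_le u v c : 0 < c -> rdot u v <= (2 * c)^-1 * nrm2 u + c / 2 * nrm2 v.
Proof.
move=> c0.
have := nrm2_ge0 (rscale (Num.sqrt c)^-1 u - rscale (Num.sqrt c) v).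
rewrite nrm2D nrm2N !nrm2Z rdotNr rdotZl rdotZr.
have sc : 0 < Num.sqrt c by rewrite sqrtr_gt0.
rewrite exprVn sqr_sqrtr; last exact: ltW.
have hs : (Num.sqrt c)^-1 * (Num.sqrt c * rdot u v) = rdot u v.
  have sn : Num.sqrt c != 0 by rewrite gt_eqF.
  rewrite mulrA mulVf //; ring.
move=> H.
have e : (2 * c)^-1 = 2^-1 * c^-1 by rewrite invfM.
rewrite e; lra.
Qed.

End Basics.

Section Deriv.
Context {R : realType}.

Lemma is_derive_ed (g : R -> R) t D :
  (forall e, 0 < e -> exists2 del, 0 < del & forall s, `|s| < del ->
      `|g (s + t) - g t - s * D| <= e * `|s|) ->
  is_derive t 1 g D.
Proof.
move=> Hg.
have H : (fun h => h^-1 *: ((g \o shift t) (h *: 1) - g t)) @ 0^' --> D.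
  apply/cvgrPdist_le => e e0.
  have [del d0 Hd] := Hg e e0.
  near=> h.
  have hn0 : h != 0 by near: h; exact: nbhs_dnbhs_neq.
  have hd : `|h| < del by near: h; exact: dnbhs0_lt.
  have := Hd h hd.
  rewrite /= /shift [h *: 1]mulr1.
  have -> : D - h^-1 * (g (h + t) - g t) = - h^-1 * (g (h + t) - g t - h * D).
    by field.
  rewrite normrM normrN normfV => Hle.
  rewrite ler_pdivrMl ?normr_gt0 //.
  by rewrite [X in _ <= X]mulrC.
constructor; first by apply/cvg_ex; exists D.
by rewrite /derive (cvg_lim _ H).
Unshelve. all: end_near.
Qed.

End Deriv.

Lemma arith2 {R : realType} (a b L t N : R) :
  a - b <= L * t * N -> a - b - (L / 2 * N) * (t + t) <= 0.
Proof. move=> H; have -> : L / 2 * N * (t + t) = L * t * N by field. lra. Qed.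

Lemma sq_le {R : realType} (x y : R) : 0 <= x -> x <= y -> x ^+ 2 <= y ^+ 2.
Proof. move=> ? ?; nra. Qed.

Section Descent.
Context {R : realType} {n : nat}.
Implicit Types u v w d : 'cV[R[i]]_n.

Lemma rscaleD (s t : R) d : rscale (s + t) d = rscale s d + rscale t d.
Proof. by rewrite /rscale rmorphD scalerDl. Qed.
Lemma rscale0 d : rscale (0 : R) d = 0.
Proof. by rewrite /rscale rmorph0 scale0r. Qed.
Lemma rscale1 d : rscale (1 : R) d = d.
Proof. by rewrite /rscale rmorph1 scale1r. Qed.

Lemma descent (f : 'cV[R[i]]_n -> R) gf L :
  is_gradient f gf -> lipschitz_with L gf -> 0 < L ->
  forall u d, f (u + d) <= f u + rdot (gf u) d + L / 2 * nrm2 d.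
Proof.
move=> Hgr Hlip L0 u d.
pose p := fun t : R => f (u + rscale t d).
pose D := fun t : R => rdot (gf (u + rscale t d)) d.
have dp : forall t : R, is_derive t (1 : R) p (D t).
  move=> t; apply: is_derive_ed => e e0.
  pose v := u + rscale t d.
  have nd1 : 0 < nrm d + 1 by have := nrm_ge0 d; lra.
  have e'0 : 0 < e / (nrm d + 1) by rewrite divr_gt0.
  have [del d0 Hd] := Hgr v _ e'0.
  exists (del / (nrm d + 1)); first by rewrite divr_gt0.
  move=> s hs.
  have eq1 : u + rscale (s + t) d = v + rscale s d by rewrite rscaleD /v [rscale s d + _]addrC addrA.
  have nr : nrm (rscale s d) < del.
    rewrite nrmZ; move: hs; rewrite ltr_pdivlMr // => hs.
    apply: le_lt_trans hs; apply: ler_wpM2l => //; lra.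
  have := Hd _ nr.
  rewrite /p eq1 rdotZr nrmZ -/v /D -/v => H.
  apply: le_trans H _.
  rewrite mulrA [X in X <= _]mulrC [X in _ <= X]mulrC.
  have hq : nrm d / (nrm d + 1) <= 1 by rewrite ler_pdivrMr // mul1r lerDl ler01.
  have -> : nrm d * (e / (nrm d + 1) * `|s|) = (nrm d / (nrm d + 1)) * (`|s| * e).
    by field; rewrite gt_eqF.
  have hse : 0 <= `|s| * e by rewrite mulr_ge0 // ltW.
  exact: ler_piMl.
pose c := L / 2 * nrm2 d.
pose phi := (p - (D 0) \*: id) - c \*: ((id : R -> R) * id).
have dphi : forall t : R, is_derive t (1:R) phi (D t - D 0 - c * (t + t)).
  move=> t; apply: is_derive_eq.
  by rewrite ![_%:A]mulr1.
have cont : {within `[0, 1], continuous phi}.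
  apply: derivable_within_continuous => z _.
  exact: (@ex_derive _ _ _ _ _ _ _ (dphi z)).
have [t /[1!in_itv] /andP[t0 t1] Heq] := MVT ltr01 (fun t _ => dphi t) cont.
have Hphi : phi 1 - phi 0 <= 0.
  rewrite Heq subr0 mulr1.
  have Hd : D t - D 0 <= L * t * nrm2 d.
    rewrite /D rscale0 addr0 -rdotBl.
    have Lt0 : 0 < L * t by rewrite mulr_gt0.
    apply: le_trans (rdot_le _ _ _ Lt0) _.
    have Hn := Hlip (u + rscale t d) u.
    have e1 : u + rscale t d - u = rscale t d by rewrite addrC addKr.
    have t0' : 0 <= t by apply: ltW; exact: t0.
    rewrite e1 nrmZ (ger0_norm t0') in Hn.
    have Hn2 : nrm2 (gf (u + rscale t d) - gf u) <= (L * t) ^+ 2 * nrm2 d.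
      rewrite -nrm_sq -nrm_sq -exprMn; apply: sq_le; first exact: nrm_ge0.
      by rewrite -mulrA.
    have := nrm2_ge0 d.
    have hi : (2 * (L * t))^-1 * ((L * t) ^+ 2 * nrm2 d) = (L * t) / 2 * nrm2 d.
      by field; rewrite !gt_eqF //; exact: t0.
    have i0 : 0 <= (2 * (L * t))^-1.
      by rewrite invr_ge0; apply: ltW; rewrite mulr_gt0.
    have := ler_wpM2l i0 Hn2.
    rewrite hi => H1 H2; clear -H1 H2; lra.
  rewrite /c; exact: arith2 Hd.
have E1 : phi 1 = f (u + rscale 1 d) - D 0 * 1 - c * (1 * 1) := erefl.
have E0 : phi 0 = f (u + rscale 0 d) - D 0 * 0 - c * (0 * 0) := erefl.
move: Hphi; rewrite E1 E0 rscale1 rscale0 addr0 /D rscale0 addr0 /c.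
clear -L0; lra.
Qed.
End Descent.

Section Range.
Context {R : realType} {n : nat}.
Implicit Types (s t : seq 'cV[R[i]]_n) (z : 'cV[R[i]]_n).

Definition inR t z := exists b : 'cV[R[i]]_(size t), z = colmx t *m b.

Lemma colmx_mul t (b : 'cV[R[i]]_(size t)) :
  colmx t *m b = \sum_(j < size t) b j 0 *: nth 0 t j.
Proof.
apply/matrixP => a c; rewrite !mxE summxE; apply: eq_bigr => j _.
by rewrite !mxE (ord1 c) mulrC.
Qed.

Lemma inR0 t : inR t 0.
Proof. by exists 0; rewrite mulmx0. Qed.
Lemma inRD t z1 z2 : inR t z1 -> inR t z2 -> inR t (z1 + z2).
Proof. by move=> [b1 ->] [b2 ->]; exists (b1 + b2); rewrite mulmxDr. Qed.
Lemma inRZ t (c : R[i]) z : inR t z -> inR t (c *: z).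
Proof. by move=> [b ->]; exists (c *: b); rewrite scalemxAr. Qed.
Lemma inR_sum t m (F : 'I_m -> 'cV[R[i]]_n) :
  (forall j, inR t (F j)) -> inR t (\sum_(j < m) F j).
Proof.
move=> H; apply: (big_ind (inR t)); [exact: inR0 | exact: inRD | by move=> j _].
Qed.

Lemma inR_nth t j : (j < size t)%N -> inR t (nth 0 t j).
Proof.
move=> hj; exists (\col_i ((i == Ordinal hj)%:R)).
rewrite colmx_mul (bigD1 (Ordinal hj)) //= big1 ?addr0.
  by rewrite mxE eqxx scale1r.
by move=> i /negbTE hi; rewrite mxE hi scale0r.
Qed.

Lemma inR_sub s t z : (forall j, (j < size s)%N -> inR t (nth 0 s j)) -> inR s z -> inR t z.
Proof.
move=> H [b ->]; rewrite colmx_mul; apply: inR_sum => j.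
by apply: inRZ; apply: H.
Qed.

Lemma inR_rcons s w z : inR s z -> inR (rcons s w) z.
Proof.
apply: inR_sub => j hj.
have -> : nth 0 s j = nth 0 (rcons s w) j by rewrite nth_rcons hj.
by apply: inR_nth; rewrite size_rcons ltnS ltnW.
Qed.

Lemma inR_full z : inR [seq col j (1%:M : 'M[R[i]]_n) | j <- enum 'I_n] z.
Proof.
have -> : z = \sum_(i < n) z i 0 *: col i (1%:M : 'M[R[i]]_n).
  rewrite -[LHS]mul1mx; apply/matrixP => a c; rewrite !mxE summxE.
  by apply: eq_bigr => i _; rewrite !mxE (ord1 c) mulrC.
apply: inR_sum => i; apply: inRZ.
have hi : (i < size [seq col j (1%:M : 'M[R[i]]_n) | j <- enum 'I_n])%N.
  by rewrite size_map size_enum_ord.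
have := inR_nth _ _ hi.
rewrite (nth_map i) ?size_enum_ord //.
have -> : nth i (enum 'I_n) i = i by apply: val_inj; rewrite /= nth_enum_ord.
by [].
Qed.

End Range.


Section Quad.
Context {R : realType}.

Lemma rscale_comb {n} (th : R) (a b : 'cV[R[i]]_n) :
  a + rscale th (b - a) = rscale th b + rscale (1 - th) a.
Proof. by rewrite /rscale rmorphB rmorph1 scalerBl scale1r scalerBr addrCA. Qed.

Lemma qformE {n} (M : 'M[R[i]]_n) v : qform M v = rdot v (M *m v).
Proof. by rewrite /qform /rdot mulmxA. Qed.

Lemma rscaleN {n} (th : R) (a : 'cV[R[i]]_n) : rscale th (- a) = - rscale th a.
Proof. by rewrite /rscale scalerN. Qed.

Lemma Fbar_exp {m n} (A : 'M[R[i]]_(m, n)) y gf alpha B x k p w (th : R) :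
  Fbar A y gf alpha B x k (p + rscale th w) =
  Fbar A y gf alpha B x k p
  + th * (rdot (A *m p - y) (A *m w) + rdot (gf (x k)) w
          + (2 * alpha k)^-1 * (rdot (p - x k) (B k *m w) + rdot w (B k *m (p - x k))))
  + th ^+ 2 * (2^-1 * nrm2 (A *m w) + (2 * alpha k)^-1 * qform (B k) w).
Proof.
rewrite /Fbar /hfun !qformE.
have e1 : A *m (p + rscale th w) - y = (A *m p - y) + rscale th (A *m w).
  by rewrite mulmxDr /rscale scalemxAr addrAC.
have e2 : p + rscale th w - x k = (p - x k) + rscale th w by rewrite addrAC.
rewrite e1 e2 mulmxDr -scalemxAr -/(rscale th (B k *m w)).
rewrite nrm2D nrm2Z rdotDr rdotZr.
rewrite !rdotDl !rdotDr !rdotZl !rdotZr.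
move: (2 * alpha k)^-1 => c.
move: (rdot (A *m p) (A *m w)) (rdot (- y) (A *m w)) (nrm2 (A *m p - y)) (nrm2 (A *m w)) => a1 a2 a3 a4.
move: (rdot (gf (x k)) p) (rdot (gf (x k)) w) (rdot p (B k *m (p - x k))) (rdot p (B k *m w)) => b1 b2 b3 b4.
move: (rdot (- x k) (B k *m (p - x k))) (rdot (- x k) (B k *m w)) (rdot w (B k *m (p - x k))) (rdot w (B k *m w)) => d1 d2 d3 d4.
by field.
Qed.

End Quad.
Lemma lin_nonneg {R : realType} (l Q : R) : 0 <= Q ->
  (forall th, 0 < th -> th <= 1 -> 0 <= th * l + th ^+ 2 * Q) -> 0 <= l.
Proof.
move=> Q0 H; rewrite leNgt; apply/negP => l0.
have D0 : 0 < Q - l + 1 by lra.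
pose th := - l / (Q - l + 1).
have th0 : 0 < th by rewrite /th divr_gt0 // oppr_gt0.
have e : th * (Q - l + 1) = - l by rewrite /th divfK // gt_eqF.
have th1 : th <= 1 by rewrite /th ler_pdivrMr // mul1r; lra.
have := H th th0 th1.
have e2 : th * l + th ^+ 2 * Q = th ^+ 2 * (l - 1).
  have -> : th ^+ 2 * Q = th * (th * Q) by rewrite expr2 mulrA.
  have -> : th * Q = - l + th * l - th by lra.
  rewrite expr2; ring.
rewrite e2 => H2.
have : 0 < th ^+ 2 by rewrite exprn_gt0.
nra.
Qed.

Lemma final_arith {R : realType} (hp hk fp fk gp gk N c eta amax L qp Q : R) :
  hp + gp + c * qp + Q <= hk + gk ->
  c * (eta * N) <= Q ->
  c * (eta * N) <= c * qp ->
  fp <= fk + (gp - gk) + L / 2 * N ->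
  eta / amax * N <= 2 * c * eta * N ->
  hp + fp <= hk + fk - (eta / amax - L / 2) * N.
Proof. move=> *; lra. Qed.

Lemma addle {R : realType} (a b c : R) : 0 <= b -> a + c <= a + b + c.
Proof. move=> *; lra. Qed.

Lemma inv_bound {R : realType} (eta a amax : R) :
  0 < eta -> 0 < a -> a <= amax -> eta / amax <= 2 * (2 * a)^-1 * eta.
Proof.
move=> e0 a0 am.
have -> : 2 * (2 * a)^-1 * eta = eta / a by field; rewrite gt_eqF.
rewrite ler_pM2l // lef_pV2 ?posrE //.
exact: lt_le_trans am.
Qed.

Section Step.
Context {R : realType} {m n : nat}.

Lemma step_descent (A : 'M[R[i]]_(m, n)) y (f : 'cV[R[i]]_n -> R) gf L alpha B x k
   (eta eta_hi amax : R) (Cs : set 'cV[R[i]]_n) (t : seq 'cV[R[i]]_n) :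
  is_gradient f gf -> lipschitz_with L gf -> 0 < L ->
  loewner_between eta eta_hi (B k) -> 0 < eta -> 0 < alpha k -> alpha k <= amax ->
  convex_subset Cs ->
  Cs (x k) -> inR t (x k) -> Cs (x k.+1) -> inR t (x k.+1) ->
  (forall z, Cs z -> inR t z -> Fbar A y gf alpha B x k (x k.+1) <= Fbar A y gf alpha B x k z) ->
  hfun A y (x k.+1) + f (x k.+1) <=
    hfun A y (x k) + f (x k) - (eta / amax - L / 2) * nrm2 (x k.+1 - x k).
Proof.
move=> Hgr Hlip L0 Hloew eta0 al0 alm Hconv Ck Rk Cp Rp Hmin.
set p := x k.+1; set xk := x k; set w := xk - p.
set G := Fbar A y gf alpha B x k.
set c := (2 * alpha k)^-1.
have c0 : 0 < c by rewrite invr_gt0 mulr_gt0.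
set Q := 2^-1 * nrm2 (A *m w) + c * qform (B k) w.
set l := rdot (A *m p - y) (A *m w) + rdot (gf xk) w
          + c * (rdot (p - xk) (B k *m w) + rdot w (B k *m (p - xk))).
have Gexp th : G (p + rscale th w) = G p + th * l + th ^+ 2 * Q by exact: Fbar_exp.
have qw : eta * nrm2 w <= qform (B k) w by case: (Hloew w).
have Q0 : c * (eta * nrm2 w) <= Q.
  rewrite /Q; have := nrm2_ge0 (A *m w).
  have : c * (eta * nrm2 w) <= c * qform (B k) w by rewrite ler_pM2l.
  move=> *; lra.
have Q0' : 0 <= Q.
  apply: le_trans _ Q0; apply: mulr_ge0; first exact: ltW.
  apply: mulr_ge0; [exact: ltW | exact: nrm2_ge0].
have l0 : 0 <= l.
  apply: (@lin_nonneg _ l Q Q0') => th th0 th1.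
  have Hz := Hmin (p + rscale th w).
  have ez : p + rscale th w = rscale th xk + rscale (1 - th) p by rewrite rscale_comb.
  have : G p <= G (p + rscale th w).
    apply: Hz; rewrite ez.
      by apply: Hconv => //; rewrite (ltW th0) th1.
    by apply: inRD; apply: inRZ.
  rewrite Gexp; lra.
have Gk : G xk = G p + l + Q.
  have -> : xk = p + rscale 1 w by rewrite rscale1 /w addrC subrK.
  by rewrite Gexp expr1n !mul1r -/xk.
have Gk' : G xk = hfun A y xk + rdot (gf xk) xk.
  by rewrite /G /Fbar subrr qformE rdot0l mulr0 addr0.
have Gp : G p = hfun A y p + rdot (gf xk) p + c * qform (B k) (p - xk) by [].
have Nw : nrm2 w = nrm2 (p - xk) by rewrite /w -opprB nrm2N.
have qp : eta * nrm2 (p - xk) <= qform (B k) (p - xk) by case: (Hloew (p - xk)).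
have Hd := @descent _ _ f gf L Hgr Hlip L0 xk (p - xk).
rewrite [xk + _]addrC subrK rdotBr in Hd.
rewrite Nw in Q0.
have HG : G p + Q <= G xk by rewrite Gk; exact: addle l0.
apply: (@final_arith _ _ _ _ _ (rdot (gf xk) p) (rdot (gf xk) xk) _ c _ _ _ (qform (B k) (p - xk)) Q).
- by rewrite -Gk' -Gp.
- exact: Q0.
- by apply: ler_wpM2l; [exact: ltW | exact: qp].
- exact: Hd.
- apply: ler_wpM2r; first exact: nrm2_ge0.
  exact: inv_bound.
Qed.
End Step.

Lemma ups_pos {R : realType} (eta L amax : R) : 0 < eta -> 0 < L -> 0 < amax ->
  amax < 2 * eta / (eta + L) -> 0 < eta / amax - (eta + L) / 2.
Proof.
move=> e0 L0 a0 H; have eL : 0 < eta + L by rewrite addr_gt0.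
rewrite ltr_pdivlMr // in H.
rewrite subr_gt0 -(ltr_pM2r a0) divfK ?gt_eqF //. lra.

Qed.

Lemma ups_le {R : realType} (eta L amax N : R) : 0 < eta -> 0 <= N ->
  (eta / amax - (eta + L) / 2) * N <= (eta / amax - L / 2) * N.
Proof. move=> e0 N0; apply: ler_wpM2r => //; lra. Qed.

Lemma bigmin_le {R : realType} (F : nat -> R) s0 (r : seq nat) j :
  j \in r -> \big[Num.min/s0]_(i <- r) F i <= F j.
Proof.
elim: r => [//|a r IH]; rewrite inE big_cons => /orP[/eqP ->| jr].
  by rewrite ge_min lexx.
by rewrite ge_min (IH jr) orbT.
Qed.

Lemma sum_step {R : realType} (Fa Fb Fc ups S n : R) :
  Fb + ups * S <= Fa -> Fc <= Fb - ups * n -> Fc + ups * (S + n) <= Fa.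
Proof. move=> *; lra. Qed.

Lemma fin2 {R : realType} (D ups k S F1 Fk Fs : R) :
  Fk + ups * S <= F1 -> Fs <= Fk -> ups * (k * D) <= ups * S -> D * (ups * k) <= F1 - Fs.
Proof. move=> *; lra. Qed.

Lemma fin3 {R : realType} (S ups F1 Fk Fs : R) :
  Fk + ups * S <= F1 -> Fs <= Fk -> S * ups <= F1 - Fs.
Proof. move=> *; lra. Qed.

Theorem theorem1 (R : realType) (m N : nat)
  (A : 'M[R[i]]_(m, N)) (y : 'cV[R[i]]_m)
  (f : 'cV[R[i]]_N -> R) (gf : 'cV[R[i]]_N -> 'cV[R[i]]_N) (L : R)
  (Cs : set 'cV[R[i]]_N) (K : option nat)
  (alpha : nat -> R) (B : nat -> 'M[R[i]]_N)
  (eta_lo eta_hi amin amax : R)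
  (x : nat -> 'cV[R[i]]_N) (Vs : nat -> seq 'cV[R[i]]_N) :
  adj A *m y != 0 ->
  is_gradient f gf ->
  (exists lb : R, forall z, lb <= f z) ->
  0 < L -> lipschitz_with L gf ->
  Cs !=set0 -> closed_subset Cs -> convex_subset Cs ->
  0 < eta_lo -> eta_lo <= eta_hi ->
  (forall k, (0 < k)%N -> is_hermitian (B k) /\ loewner_between eta_lo eta_hi (B k)) ->
  0 < amin -> amin <= amax -> amax < 2 * eta_lo / (eta_lo + L) ->
  (forall k, (0 < k)%N -> amin <= alpha k <= amax) ->
  (forall K0 : nat, K = Some K0 -> (0 < K0)%N) ->
  GKSM_run A y gf Cs K alpha B x Vs ->
  let F := fun z => hfun A y z + f z in
  let ups := eta_lo / amax - (eta_lo + L) / 2 in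
  let Fstar := inf [set F z | z in Cs] in
  (forall k, (0 < k)%N -> F (x k.+1) <= F (x k)) /\
  (forall k, (0 < k)%N -> Delta x k <= (F (x 1%N) - Fstar) / (ups * k%:R)) /\
  (nrm (x k.+1 - x k) @[k --> \oo] --> (0 : R)).
Proof.
move=> HAy Hgr [lb Hlb] L0 Hlip Cne Ccl Cconv eta0 etah HB amin0 aminmax amaxb Hal HK.
move=> [HV1 [Cx1 [b1 Hx1]] Hmin Hexp Hid] F ups Fstar.
have amax0 : 0 < amax by exact: lt_le_trans aminmax.
have ups0 : 0 < ups by exact: ups_pos.
have Hrange : forall k, (0 < k)%N -> forall z, inR (Vs k) z -> inR (Vs k.+1) z.
  move=> k hk z hz.
  case hK : (leK k K).
    rewrite (Hexp k hk hK) /=.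
    by case: ifP => _ //; apply: inR_rcons.
  rewrite (Hid k hk); first exact: inR_full.
  by rewrite hK.
have Hfeas : forall k, (0 < k)%N -> Cs (x k) /\ inR (Vs k) (x k).
  case=> [//|k] _.
  case: k => [|k].
    by split => //; exists b1.
  have [beta [-> Cb _]] := Hmin k.+1 isT.
  split => //; apply: Hrange => //; by exists beta.
have Hstep : forall k, (0 < k)%N -> F (x k.+1) <= F (x k) - ups * nrm2 (x k.+1 - x k).
  move=> k hk.
  have [beta [ex Cb Hb]] := Hmin k hk.
  have [Ck Rk] := Hfeas k hk.
  have [_ Hloew] := HB k hk.
  have /andP[alm1 alm2] := Hal k hk.
  have al0 : 0 < alpha k by exact: lt_le_trans alm1.
  apply: le_trans (@step_descent _ _ _ A y f gf L alpha B x k eta_lo eta_hi amax Cs (Vs k)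
     Hgr Hlip L0 Hloew eta0 al0 alm2 Cconv Ck Rk _ _ _) _.
  - by rewrite ex.
  - by exists beta.
  - by move=> z Cz [b ez]; rewrite ex; subst z; apply: Hb.
  - rewrite lerD2l lerN2; apply: ups_le => //; exact: nrm2_ge0.
have Hsum : forall M, F (x M.+1) + ups * \sum_(0 <= j < M) nrm2 (x j.+2 - x j.+1) <= F (x 1%N).
  elim => [|M IH]; first by rewrite big_geq // mulr0 addr0.
  rewrite big_nat_recr //=; exact: sum_step IH (Hstep M.+1 isT).
have HF : forall z, Cs z -> Fstar <= F z.
  move=> z Cz; apply: ge_inf; last by exists z.
  exists lb => _ [w _ <-].
  rewrite /F -[lb]add0r; apply: lerD; last exact: Hlb.
  apply: mulr_ge0; [by rewrite invr_ge0 | exact: nrm2_ge0].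
have Fx_ge : forall M, Fstar <= F (x M.+1).
  by move=> M; apply: HF; case: (Hfeas M.+1 isT).
split.
  move=> k hk; apply: le_trans (Hstep k hk) _.
  rewrite gerBl; apply: mulr_ge0; [exact: ltW | exact: nrm2_ge0].
split.
  move=> k hk.
  have Hk : k%:R * Delta x k <= \sum_(0 <= j < k) nrm2 (x j.+2 - x j.+1).
    have : \sum_(1 <= j < k.+1) Delta x k <= \sum_(1 <= j < k.+1) nrm2 (x j.+1 - x j).
      apply: ler_sum_nat => j hj; rewrite /Delta; apply: bigmin_le.
      by rewrite mem_index_iota.
    by rewrite sumr_const_nat subn1 /= mulr_natl big_add1 /=.
  rewrite ler_pdivlMr ?mulr_gt0 ?ltr0n //.
  apply: (@fin2 _ _ _ _ _ _ _ _ (Hsum k) (Fx_ge k)).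
  by apply: ler_wpM2l => //; exact: ltW.
pose u := fun j : nat => nrm2 (x j.+2 - x j.+1).
have Hs : cvgn (series u).
  apply: nondecreasing_is_cvgn.
    by apply: nondecreasing_series => j _ _; exact: nrm2_ge0.
  exists ((F (x 1%N) - Fstar) / ups) => _ [M _ <-].
  rewrite ler_pdivlMr //.
  exact: (@fin3 _ _ _ _ _ _ (Hsum M) (Fx_ge M)).
have Hu := cvg_series_cvg_0 Hs.
have Hv : (fun k => nrm2 (x k.+1 - x k)) @ \oo --> (0:R).
  by rewrite -cvg_shiftS; exact: Hu.
have Hs0 : Num.sqrt x @[x --> (0:R)] --> Num.sqrt (0:R) by apply: sqrt_continuous.
have H := cvg_comp _ _ Hv Hs0.
by rewrite sqrtr0 in H; exact: H.
Qed.
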